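(* Let $p$ be a prime, $1/2\le\alpha<1$, $\gamma=1-\alpha$, $\beta<\alpha^3$, and suppose $\epsilon=\alpha^3-\beta\ge\gamma^2$. Then $n_p(\alpha,\beta)\le 3\log_p(1/\gamma)$.
   Context: For a prime $p$, $A\subseteq\mathbb{F}_p^n$ has density $|A|/p^n$; the density of 3-APs in $A$ with common difference $d$ is $p^{-n}|\{x: x,x+d,x+2d\in A\}|$. $n_p(\alpha,\beta)$ is the least positive integer $N$ such that for all $n\ge N$ and all $A\subseteq\mathbb{F}_p^n$ of density at least $\alpha$ some nonzero $d$ has 3-AP density at least $\beta$. *)

(* Defs.v *)
From Stdlib Require Import Reals.
From mathcomp Require Import all_boot all_order all_algebra.
Set Implicit Arguments. Unset Strict Implicit. Unset Printing Implicit Defensive.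
Import GRing.Theory.

Section AP.
Local Open Scope ring_scope.
Definition ap3_count (p n : nat) (A : {set 'rV['F_p]_n}) (d : 'rV['F_p]_n) : nat :=
  #|[set x : 'rV['F_p]_n | [&& x \in A, x + d \in A & x + d *+ 2 \in A]]|.

Definition nonzero_vec (p n : nat) (d : 'rV['F_p]_n) : bool := d != 0.
End AP.

Definition density (p n : nat) (A : {set 'rV['F_p]_n}) : R :=
  Rdiv (INR #|A|) (INR (expn p n)).

Definition ap3_density (p n : nat) (A : {set 'rV['F_p]_n}) (d : 'rV['F_p]_n) : R :=
  Rdiv (INR (ap3_count A d)) (INR (expn p n)).

Definition good_dim (p : nat) (alpha beta : R) (n : nat) : Prop :=
  forall A : {set 'rV['F_p]_n}, Rge (density A) alpha ->
    exists d : 'rV['F_p]_n, nonzero_vec d /\ Rge (ap3_density A d) beta.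

(* Main.v *)
Require Import Defs.
From Stdlib Require Import Reals Lra Psatz.
From mathcomp Require Import all_boot all_order all_algebra zify.
Set Implicit Arguments. Unset Strict Implicit. Unset Printing Implicit Defensive.
Import GRing.Theory.

Section Comb.
Variables (p n : nat) (A : {set 'rV['F_p]_n}).
Local Notation V := 'rV['F_p]_n.

Definition bb (v : V) : nat := v \notin A.
Definition bsum := (\sum_(v : V) bb v)%N.

Lemma sumconst (c : nat) : (\sum_(v : V) c = #|V| * c)%N.
Proof. by rewrite sum_nat_const. Qed.

Lemma shift (F : V -> nat) (c : V) : (\sum_(x : V) F (x + c)%R = \sum_x F x)%N.
Proof. symmetry; exact: (reindex_inj (addIr c)). Qed.

Lemma shiftl (F : V -> nat) (c : V) : (\sum_(x : V) F (c + x)%R = \sum_x F x)%N.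
Proof. rewrite -(shift F c); apply: eq_bigr => x _; by rewrite addrC. Qed.

Lemma ap3_sum d : ap3_count A d =
  (\sum_(x : V) [&& x \in A, (x + d)%R \in A & (x + d *+ 2)%R \in A])%N.
Proof.
rewrite /ap3_count -sum1_card big_mkcond /=; apply: eq_bigr => x _.
by rewrite inE; case: (_ && _).
Qed.

Lemma pointwise (a b c : bool) :
  (1 + ~~a * ~~b + ~~b * ~~c <= (a && b && c) + ~~a + ~~b + ~~c)%N.
Proof. by case: a; case: b; case: c. Qed.

Lemma pairsum : (\sum_(d : V) \sum_(x : V) bb x * bb (x + d)%R = bsum * bsum)%N.
Proof.
rewrite exchange_big /= /bsum big_distrl /=; apply: eq_bigr => x _.
by rewrite -big_distrr /= shiftl.
Qed.

Lemma main_comb :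
  (#|V| * #|V| + 2 * (bsum * bsum) <= \sum_(d : V) ap3_count A d + 3 * (#|V| * bsum))%N.
Proof.
have H : (\sum_(d : V) \sum_(x : V) (1 + bb x * bb (x + d)%R + bb (x + d)%R * bb (x + d *+ 2)%R)
   <= \sum_(d : V) \sum_(x : V) ([&& x \in A, (x + d)%R \in A & (x + d *+ 2)%R \in A]
        + bb x + bb (x + d)%R + bb (x + d *+ 2)%R))%N.
  by apply: leq_sum => d _; apply: leq_sum => x _; rewrite /bb; have := pointwise (x \in A) ((x + d)%R \in A) ((x + d *+ 2)%R \in A); by rewrite -andbA.
move: H.
under eq_bigr do rewrite !big_split /=.
under [X in (_ <= X)%N]eq_bigr do rewrite !big_split /=.
rewrite !big_split /= pairsum.
have E1 : (\sum_(d : V) \sum_(x : V) bb (x + d)%R * bb (x + d *+ 2)%R = bsum * bsum)%N.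
  rewrite -pairsum; apply: eq_bigr => d _.
  rewrite -(shift (fun x => bb x * bb (x + d)%R) d) /=.
  by apply: eq_bigr => x _; rewrite mulr2n addrA.
rewrite E1.
have E2 : (\sum_(d : V) \sum_(x : V) bb (x + d)%R = #|V| * bsum)%N.
  by under eq_bigr do rewrite shift; rewrite sumconst.
have E3 : (\sum_(d : V) \sum_(x : V) bb (x + d *+ 2)%R = #|V| * bsum)%N.
  by under eq_bigr do rewrite shift; rewrite sumconst.
have E4 : (\sum_(d : V) \sum_(x : V) bb x = #|V| * bsum)%N by rewrite sumconst.
have E5 : (\sum_(d : V) \sum_(x : V) 1 = #|V| * #|V|)%N by rewrite !sumconst muln1.
rewrite E2 E3 E4 E5.
under [X in (_ <= X + _ + _ + _)%N]eq_bigr do rewrite -ap3_sum.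
move=> H; lia.
Qed.
Lemma predgt (x : nat) : (1 < x)%N -> (0 < x.-1)%N.
Proof. lia. Qed.

Lemma fin_arith (a s t x : nat) : (1 < x)%N -> (s <= x.-1 * t)%N -> (a + s + t <= a + x * t)%N.
Proof. nia. Qed.

Lemma ap3_0 : ap3_count A 0%R = #|A|.
Proof.
rewrite /ap3_count; apply: eq_card => x; by rewrite inE mul0rn !addr0 !andbb.
Qed.

Lemma bsumC : (#|A| + bsum = #|V|)%N.
Proof.
have -> : bsum = #|~: A|.
  rewrite /bsum -sum1_card [RHS]big_mkcond /=; apply: eq_bigr => x _.
  by rewrite /bb inE; case: (x \in A).
exact: cardsC.
Qed.

Lemma exists_d : (1 < #|V|)%N -> exists d : V, d != 0%R /\
  (\sum_(d' : V) ap3_count A d' + ap3_count A d <= #|A| + #|V| * ap3_count A d)%N.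
Proof.
move=> hV.
have hc : (0 < #|predC1 (0%R:V)|)%N by rewrite cardC1; exact: predgt hV.
case: (eq_bigmax_cond (fun d => ap3_count A d) hc) => d0 hd0 hmax.
exists d0; split; first by [].
rewrite (bigD1 (0%R:V)) //= ap3_0.
have H : (\sum_(i | i != 0%R) ap3_count A i <= \sum_(i in predC1 (0%R:V)) ap3_count A d0)%N.
  apply: leq_sum => i hi; rewrite -hmax; exact: (leq_bigmax_cond (P := predC1 (0%R:V))).
move: H; rewrite sum_nat_const cardC1 => H.
exact: (fin_arith _ hV H).
Qed.
End Comb.

Section Real.
Open Scope R_scope.
Lemma real_part (al be a b N S t : R) :
  1/2 <= al -> al < 1 -> be <= al^3 - (1-al)^2 ->
  a + b = N -> 0 <= b -> 0 <= t ->
  N*N + 2*(b*b) <= S + 3*(N*b) ->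
  S + t <= a + N * t ->
  a / N >= al -> N * (1-al)^3 >= 1 ->
  t / N >= be.
Proof.
intros h1 h2 h3 h4 h5 h6 h7 h8 h9 h10.
assert (exists g, g = 1 - al) as [g Hg] by (exists (1-al); reflexivity).
assert (Hal : al = 1 - g) by lra. subst al.
replace (1 - (1 - g)) with g in * by ring.
clear Hg.
assert (hg : 0 < g <= 1/2) by lra.
assert (g3 : g^3 <= 1/8) by (assert (g^3 <= (1/2)^3) by (apply pow_incr; lra); lra).
assert (g3p : 0 < g^3) by (apply pow_lt; lra).
assert (hN : N >= 8).
{ destruct (Rlt_or_le N 8) as [H|H]; [|lra].
  assert (N * g^3 < 8 * g^3) by (apply Rmult_lt_compat_r; lra). lra. }
assert (ha : a >= (1-g) * N).
{ apply Rge_le in h9. apply Rle_ge. apply (Rmult_le_reg_r (/N)). apply Rinv_0_lt_compat; lra.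
  replace ((1-g) * N * / N) with (1-g) by (field; lra). unfold Rdiv in h9; lra. }
assert (hb : b <= g * N) by lra.
assert (hgN : g*N <= N/2) by (assert (g*N <= (1/2)*N) by (apply Rmult_le_compat_r; lra); lra).
assert (hfac : 0 <= (g*N - b) * (-(2*b + 2*g*N - 3*N + 1))) by
  (apply Rmult_le_pos; lra).
assert (hS : S - a >= N*N*(1 - 3*g + 2*g^2) - (1-g)*N).
{ replace a with (N - b) by lra.
  assert (E : (g*N - b) * (-(2*b + 2*g*N - 3*N + 1)) =
     (N*N + 2*(b*b) - 3*(N*b)) - N + b - (N*N*(1 - 3*g + 2*g^2) - (1-g)*N)) by ring.
  lra. }
assert (hc : be <= 1 - 3*g + 2*g^2 - g^3).
{ assert (E : (1-g)^3 - g^2 = 1 - 3*g + 2*g^2 - g^3) by ring. lra. }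
assert (hk1 : (N-1)*be <= (N-1)*(1 - 3*g + 2*g^2 - g^3)).
{ apply Rmult_le_compat_l; lra. }
assert (hq : 1 - 2*g + 2*g^2 - g^3 >= 0).
{ assert (E : 1 - 2*g + 2*g^2 - g^3 = (1 - 2*g) + g*g*(2-g)) by ring.
  assert (0 <= g*g*(2-g)) by (apply Rmult_le_pos; [apply Rmult_le_pos|]; lra). lra. }
assert (hk : N*(1 - 3*g + 2*g^2) - (1-g) - (N-1)*be >= 0).
{ assert (E : N*(1 - 3*g + 2*g^2) - (1-g) - (N-1)*(1 - 3*g + 2*g^2 - g^3)
         = (1 - 2*g + 2*g^2 - g^3) + (N * g^3 - 1)) by ring.
  lra. }
assert (ht : (N-1)*t >= (N-1)*(be*N)).
{ assert (E1 : (N-1)*t = a + N*t - t - a) by ring.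
  assert (E2 : N*N*(1 - 3*g + 2*g^2) - (1-g)*N - (N-1)*(be*N)
          = N * (N*(1 - 3*g + 2*g^2) - (1-g) - (N-1)*be)) by ring.
  assert (0 <= N * (N*(1 - 3*g + 2*g^2) - (1-g) - (N-1)*be)) by (apply Rmult_le_pos; lra).
  lra. }
assert (ht2 : t >= be*N).
{ apply Rle_ge. apply (Rmult_le_reg_l (N-1)). lra. lra. }
apply Rle_ge. apply (Rmult_le_reg_r N). lra.
unfold Rdiv. rewrite Rmult_assoc Rinv_l; lra.
Qed.

Lemma log_part (P g : R) (n : nat) : 2 <= P -> 0 < g -> 3*(ln(1/g)/ln P) <= INR n ->
  P^n * g^3 >= 1.
Proof.
intros hP hg hl.
assert (hlP : 0 < ln P) by (rewrite <- ln_1; apply ln_increasing; lra).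
assert (h1 : 3 * ln (1/g) <= INR n * ln P).
{ assert (E : 3 * (ln (1/g) / ln P) * ln P = 3 * ln (1/g)) by (field; lra).
  rewrite <- E. apply Rmult_le_compat_r; lra. }
assert (hPn : 0 < P^n) by (apply pow_lt; lra).
assert (hq : 0 < 1/g) by (apply Rdiv_lt_0_compat; lra).
assert (h2 : (1/g)^3 <= P^n).
{ destruct (Rle_or_lt ((1/g)^3) (P^n)) as [H|H]; [exact H|].
  apply ln_increasing in H; [|exact hPn].
  rewrite !ln_pow in H; try lra. simpl (INR 3) in H. lra. }
assert (E : (1/g)^3 * g^3 = 1) by (field; lra).
assert (0 < g^3) by (apply pow_lt; lra).
assert ((1/g)^3 * g^3 <= P^n * g^3) by (apply Rmult_le_compat_r; lra).
lra.
Qed.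

Lemma INR_expn (p n : nat) : INR (expn p n) = INR p ^ n.
Proof.
induction n as [|n IH]; [reflexivity|].
rewrite expnS mult_INR IH. simpl. ring.
Qed.
End Real.

Theorem mainTheorem12 (p : nat) (alpha beta : R) :
  prime p ->
  Rle (1 / 2) alpha -> Rlt alpha 1 ->
  Rlt beta (alpha ^ 3) ->
  Rge (alpha ^ 3 - beta) ((1 - alpha) ^ 2) ->
  forall n : nat, (1 <= n)%N ->
    Rle (3 * (ln (1 / (1 - alpha)) / ln (INR p))) (INR n) ->
    good_dim p alpha beta n.
Proof.
move=> hp h1 h2 h3 h4 n hn hlog A hdens.
have hN : #|{: 'rV['F_p]_n}| = expn p n by rewrite card_mx card_Fp // mul1n.
have hp2 : (2 <= p)%N by exact: prime_gt1.
have hV : (1 < #|{: 'rV['F_p]_n}|)%N.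
  rewrite hN.
  apply: (leq_trans hp2).
  have := leq_pexp2l (prime_gt0 hp) hn. by rewrite expn1.
case: (exists_d A hV) => d [hd0 hineq].
exists d; split; first exact: hd0.
have hc := main_comb A.
rewrite hN in hc hineq.
have hb := bsumC A. rewrite hN in hb.
move/leP: hc => hc. move/leP: hineq => hineq.
apply le_INR in hc. apply le_INR in hineq.
rewrite !plus_INR !mult_INR in hc. rewrite !plus_INR !mult_INR in hineq.
have hb' : Rplus (INR #|A|) (INR (bsum A)) = INR (expn p n) by rewrite -plus_INR; congr INR; exact: hb.
have hP : Rle 2 (INR p).
  have := le_INR 2 p (elimT leP hp2). simpl. lra.
have hg : Rlt 0 (Rminus 1 alpha) by lra.
have hlg := log_part hP hg hlog.
rewrite -INR_expn in hlg.
unfold ap3_density.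
apply (@real_part alpha beta (INR #|A|) (INR (bsum A)) (INR (expn p n))
        (INR (\sum_(d' : 'rV['F_p]_n) ap3_count A d')) (INR (ap3_count A d))).
- exact h1.
- exact h2.
- lra.
- exact hb'.
- exact (pos_INR _).
- exact (pos_INR _).
- rewrite INR_0 in hc; lra.
- exact hineq.
- exact hdens.
- exact hlg.
Qed.
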